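(* Let $U\colon\mathcal{E}\to\mathbf{Set}$ be a topological category and $\overline T\colon\mathcal{E}\to\mathcal{E}$ a lifting of a monad $T\colon\mathbf{Set}\to\mathbf{Set}$. Then the category $\mathit{EM}(\overline T)$ of Eilenberg–Moore algebras of $\overline T$ is topological over $\mathit{EM}(T)$ via the functor $V\colon\mathit{EM}(\overline T)\to\mathit{EM}(T)$ sending $(A,a)$ to $(UA,Ua)$.
   Context: A functor $V\colon\mathcal{A}\to\mathcal{C}$ is topological if every $V$-structured source $(f_i\colon C\to VA_i)_{i\in I}$ in $\mathcal{C}$ has a unique $V$-initial lift: an $\mathcal{A}$-object $A$ with morphisms $\bar f_i\colon A\to A_i$, $V\bar f_i=f_i$, such that for every source $(g_i\colon D\to A_i)$ in $\mathcal{A}$ and $\mathcal{C}$-morphism $h\colon VD\to VA$ with $f_i\cdot h=Vg_i$ for all $i$, there is $\bar h\colon D\to A$ with $V\bar h=h$ and $\bar f_i\bar h=g_i$. $\overline T$ lifts $T$: a monad on $\mathcal{E}$ with $U\overline T=TU$ whose unit and multiplication lie over those of $T$. *)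

(* Defs.v *)
From Stdlib Require Import FunctionalExtensionality ProofIrrelevance.

(** * Categories (hom-equality is Leibniz equality) *)
Record Category := {
  Ob :> Type;
  Hom : Ob -> Ob -> Type;
  idm : forall A, Hom A A;
  comp : forall A B C, Hom B C -> Hom A B -> Hom A C;
  comp_idl : forall A B (f : Hom A B), comp A B B (idm B) f = f;
  comp_idr : forall A B (f : Hom A B), comp A A B f (idm A) = f;
  comp_assoc : forall A B C D (h : Hom C D) (g : Hom B C) (f : Hom A B),
      comp A C D h (comp A B C g f) = comp A B D (comp B C D h g) f }.
Arguments Hom {c} _ _.
Arguments idm {c} A.
Arguments comp {c A B C} _ _.
Arguments comp_idl {c A B} f.
Arguments comp_idr {c A B} f.
Arguments comp_assoc {c A B C D} h g f.
Notation "g ∘ f" := (comp g f) (at level 40, left associativity).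

Record Functor (C D : Category) := {
  Fob : C -> D;
  Fmap : forall (A B : C), Hom A B -> Hom (Fob A) (Fob B);
  Fmap_id : forall A, Fmap A A (idm A) = idm (Fob A);
  Fmap_comp : forall A B X (g : Hom B X) (f : Hom A B),
      Fmap A X (g ∘ f) = Fmap B X g ∘ Fmap A B f }.
Arguments Fob {C D} _ _.
Arguments Fmap {C D} _ {A B} _.
Arguments Fmap_id {C D} _ A.
Arguments Fmap_comp {C D} _ {A B X} g _.

Record Monad (C : Category) := {
  MF : Functor C C;
  eta : forall X, Hom X (Fob MF X);
  mu : forall X, Hom (Fob MF (Fob MF X)) (Fob MF X);
  eta_nat : forall X Y (f : Hom X Y), Fmap MF f ∘ eta X = eta Y ∘ f;
  mu_nat : forall X Y (f : Hom X Y),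
      Fmap MF f ∘ mu X = mu Y ∘ Fmap MF (Fmap MF f);
  mu_eta_l : forall X, mu X ∘ eta (Fob MF X) = idm (Fob MF X);
  mu_eta_r : forall X, mu X ∘ Fmap MF (eta X) = idm (Fob MF X);
  mu_assoc : forall X, mu X ∘ mu (Fob MF X) = mu X ∘ Fmap MF (mu X) }.
Arguments MF {C} m.
Arguments eta {C} m X.
Arguments mu {C} m X.

Definition SetCat : Category :=
  {| Ob := Type;
     Hom := fun X Y => X -> Y;
     idm := fun X x => x;
     comp := fun _ _ _ g f x => g (f x);
     comp_idl := fun _ _ _ => eq_refl;
     comp_idr := fun _ _ _ => eq_refl;
     comp_assoc := fun _ _ _ _ _ _ _ => eq_refl |}.

Definition eqhom {C : Category} {X Y : C} (e : X = Y) : Hom X Y :=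
  match e in _ = Z return Hom X Z with eq_refl => idm X end.

Lemma eqhom_inv_l {C : Category} {X Y : C} (e : X = Y) :
  eqhom (eq_sym e) ∘ eqhom e = idm X.
Proof. destruct e; simpl; apply comp_idl. Qed.

Lemma eqhom_inv_r {C : Category} {X Y : C} (e : X = Y) :
  eqhom e ∘ eqhom (eq_sym e) = idm Y.
Proof. destruct e; simpl; apply comp_idl. Qed.

Lemma iso_move {C : Category} {X Y Z : C} (c : Hom X Y) (c' : Hom Y X)
  (H : c' ∘ c = idm X) (x : Hom Z X) (y : Hom Z Y) :
  c ∘ x = y -> x = c' ∘ y.
Proof.
  intros <-. rewrite comp_assoc, H, comp_idl. reflexivity.
Qed.

(** * Liftings:  Tb is a lifting of T along U when U Tb = T U (strictly, the
    object equality being recorded by [lift_ob] and morphisms transported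
    along it), and the unit and multiplication of Tb lie over those of T. *)
Record IsLifting {E C : Category} (U : Functor E C) (T : Monad C) (Tb : Monad E)
  : Prop := {
  lift_ob : forall A, Fob U (Fob (MF Tb) A) = Fob (MF T) (Fob U A);
  lift_map : forall A B (f : Hom A B),
      eqhom (lift_ob B) ∘ Fmap U (Fmap (MF Tb) f)
      = Fmap (MF T) (Fmap U f) ∘ eqhom (lift_ob A);
  lift_eta : forall A, eqhom (lift_ob A) ∘ Fmap U (eta Tb A) = eta T (Fob U A);
  lift_mu : forall A,
      eqhom (lift_ob A) ∘ Fmap U (mu Tb A)
      = mu T (Fob U A) ∘ Fmap (MF T) (eqhom (lift_ob A))
        ∘ eqhom (lift_ob (Fob (MF Tb) A)) }.
Arguments lift_ob {E C U T Tb} i A.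
Arguments lift_map {E C U T Tb} i {A B} f.
Arguments lift_eta {E C U T Tb} i A.
Arguments lift_mu {E C U T Tb} i A.

Record EMob {C : Category} (T : Monad C) := {
  carrier : C;
  str : Hom (Fob (MF T) carrier) carrier;
  str_eta : str ∘ eta T carrier = idm carrier;
  str_mu : str ∘ mu T carrier = str ∘ Fmap (MF T) str }.
Arguments carrier {C T} e.
Arguments str {C T} e.

Definition EMhom {C : Category} (T : Monad C) (X Y : EMob T) :=
  { f : Hom (carrier X) (carrier Y) | f ∘ str X = str Y ∘ Fmap (MF T) f }.

Lemma EMhom_eq {C : Category} (T : Monad C) (X Y : EMob T) (f g : EMhom T X Y) :
  proj1_sig f = proj1_sig g -> f = g.
Proof.
  destruct f as [f Hf], g as [g Hg]; simpl; intros ->.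
  f_equal; apply proof_irrelevance.
Qed.

Definition EMid {C : Category} (T : Monad C) (X : EMob T) : EMhom T X X.
Proof.
  exists (idm (carrier X)).
  rewrite Fmap_id, comp_idl, comp_idr; reflexivity.
Defined.

Definition EMcomp {C : Category} (T : Monad C) (X Y Z : EMob T)
  (g : EMhom T Y Z) (f : EMhom T X Y) : EMhom T X Z.
Proof.
  exists (proj1_sig g ∘ proj1_sig f).
  destruct g as [g Hg], f as [f Hf]; simpl.
  rewrite <- comp_assoc, Hf, comp_assoc, Hg, <- comp_assoc, <- Fmap_comp.
  reflexivity.
Defined.

Definition EM {C : Category} (T : Monad C) : Category.
Proof.
  refine {| Ob := EMob T; Hom := EMhom T; idm := EMid T; comp := EMcomp T |}.
  - intros; apply EMhom_eq; simpl; apply comp_idl.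
  - intros; apply EMhom_eq; simpl; apply comp_idr.
  - intros; apply EMhom_eq; simpl; apply comp_assoc.
Defined.

(** * The comparison functor V : EM(Tb) -> EM(T),  (A, a) |-> (UA, Ua)
    (Ua : U(Tb A) -> UA, read as a map T(UA) -> UA via U Tb = T U). *)
Section LiftedEM.
Context {E C : Category} (U : Functor E C) (T : Monad C) (Tb : Monad E)
        (L : IsLifting U T Tb).

Local Notation k A := (eqhom (lift_ob L A)).
Local Notation kk A := (eqhom (eq_sym (lift_ob L A))).

Lemma lift_eta' (A : E) : Fmap U (eta Tb A) = kk A ∘ eta T (Fob U A).
Proof. apply (iso_move (k A)); [apply eqhom_inv_l | apply lift_eta]. Qed.

Lemma lift_nat' (A B : E) (f : Hom A B) :
  Fmap U (Fmap (MF Tb) f) ∘ kk A = kk B ∘ Fmap (MF T) (Fmap U f).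
Proof.
  apply (iso_move (k B)); [apply eqhom_inv_l |].
  rewrite comp_assoc. rewrite (lift_map L f).
  rewrite <- comp_assoc. 
  rewrite eqhom_inv_r, comp_idr. reflexivity.
Qed.

Lemma lift_mu' (A : E) :
  kk A ∘ mu T (Fob U A)
  = Fmap U (mu Tb A) ∘ kk (Fob (MF Tb) A) ∘ Fmap (MF T) (kk A).
Proof.
  symmetry.
  rewrite (iso_move _ _ (eqhom_inv_l _) _ _ (lift_mu L A)).
  rewrite <- !comp_assoc.
  rewrite (comp_assoc (eqhom (lift_ob L (Fob (MF Tb) A)))), eqhom_inv_r, comp_idl.
  rewrite <- Fmap_comp, eqhom_inv_r, Fmap_id, comp_idr. reflexivity.
Qed.

Definition Vob (X : EMob Tb) : EMob T.
Proof.
  refine {| carrier := Fob U (carrier X);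
            str := Fmap U (str X) ∘ kk (carrier X) |}.
  - rewrite <- comp_assoc, <- lift_eta', <- Fmap_comp, str_eta, Fmap_id.
    reflexivity.
  - rewrite <- comp_assoc, lift_mu', !comp_assoc, <- Fmap_comp, str_mu, Fmap_comp.
    rewrite <- (comp_assoc (Fmap U (str X))), <- (comp_assoc (Fmap U (str X))).
    rewrite lift_nat', Fmap_comp, !comp_assoc. reflexivity.
Defined.

Definition Vmap (X Y : EMob Tb) (f : EMhom Tb X Y) : EMhom T (Vob X) (Vob Y).
Proof.
  exists (Fmap U (proj1_sig f)).
  destruct f as [f Hf]; simpl.
  rewrite comp_assoc, <- Fmap_comp, Hf, Fmap_comp, <- comp_assoc, lift_nat'.
  rewrite comp_assoc. reflexivity.
Defined.

Definition EMV : Functor (EM Tb) (EM T).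
Proof.
  refine (Build_Functor (EM Tb) (EM T) Vob Vmap _ _).
  - intros; apply EMhom_eq; simpl; apply Fmap_id.
  - intros; apply EMhom_eq; simpl; apply Fmap_comp.
Defined.
End LiftedEM.

Section Topological.
Context {A C : Category} (V : Functor A C).

Record Lift (I : Type) (X : C) (Ai : I -> A) (f : forall i, Hom X (Fob V (Ai i))) := {
  lob : A;
  leq : Fob V lob = X;
  lmor : forall i, Hom lob (Ai i);
  lover : forall i, Fmap V (lmor i) = f i ∘ eqhom leq }.

Definition is_initial_lift (I : Type) (X : C) (Ai : I -> A)
  (f : forall i, Hom X (Fob V (Ai i))) (L : Lift I X Ai f) : Prop :=
  forall (D : A) (g : forall i, Hom D (Ai i)) (h : Hom (Fob V D) X),
    (forall i, f i ∘ h = Fmap V (g i)) ->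
    exists hb : Hom D (lob _ _ _ _ L),
      eqhom (leq _ _ _ _ L) ∘ Fmap V hb = h /\
      forall i, lmor _ _ _ _ L i ∘ hb = g i.

Definition topological : Prop :=
  forall (I : Type) (X : C) (Ai : I -> A) (f : forall i, Hom X (Fob V (Ai i))),
    exists L : Lift I X Ai f,
      is_initial_lift I X Ai f L /\
      forall L' : Lift I X Ai f, is_initial_lift I X Ai f L' -> L' = L.
End Topological.

(* Main.v *)
Require Import Defs.
From Stdlib Require Import FunctionalExtensionality ProofIrrelevance Eqdep Bool.

Lemma top_faithful {A C : Category} (V : Functor A C) :
  topological V -> forall D B (f g : Hom D B), Fmap V f = Fmap V g -> f = g.
Proof.
  intros HV D B f g Hfg.
  destruct (HV bool (Fob V D) (fun _ => B) (fun _ => Fmap V f)) as [L0 [Hi Hu]].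
  pose (L' := Build_Lift V bool (Fob V D) (fun _ => B) (fun _ => Fmap V f)
               (lob V _ _ _ _ L0) (leq V _ _ _ _ L0)
               (fun b => lmor V _ _ _ _ L0 (negb b))
               (fun b => lover V _ _ _ _ L0 (negb b))).
  assert (HL' : is_initial_lift V bool (Fob V D) (fun _ => B) (fun _ => Fmap V f) L').
  { intros D' g' h H.
    destruct (Hi D' (fun b => g' (negb b)) h (fun b => H (negb b))) as [hb [H1 H2]].
    exists hb; split; [exact H1|]. intro i. simpl. rewrite H2, negb_involutive.
    reflexivity. }
  specialize (Hu L' HL').
  pose proof (f_equal (fun M => existT (fun o => Hom o B) (lob V _ _ _ _ M)
                                  (lmor V _ _ _ _ M true)) Hu) as Hx.
  simpl in Hx. apply inj_pair2 in Hx.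
  destruct (Hi D (fun b => if b then f else g) (idm _)) as [hb [_ H2]].
  { intros [|]; rewrite comp_idr; [reflexivity| exact Hfg]. }
  rewrite <- (H2 true), <- (H2 false). simpl. rewrite Hx. reflexivity.
Qed.

Lemma eqhom_EM {C : Category} (T : Monad C) (X Y : EMob T) (e : X = Y) :
  proj1_sig (@eqhom (EM T) X Y e) = eqhom (f_equal carrier e).
Proof. destruct e; reflexivity. Qed.

Lemma EMob_eq {C : Category} (T : Monad C) (c : C) s1 s2 p1 p2 q1 q2 :
  s1 = s2 -> Build_EMob C T c s1 p1 p2 = Build_EMob C T c s2 q1 q2.
Proof. intros ->. f_equal; apply proof_irrelevance. Qed.

Theorem lemma4 (E : Category) (U : Functor E SetCat) (T : Monad SetCat)
  (Tb : Monad E) (L : IsLifting U T Tb) :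
  topological U -> topological (EMV U T Tb L).
Proof.
  intros HU I X Ai f.
  pose proof (top_faithful U HU) as HUf.
  pose (fu := fun i => proj1_sig (f i)).
  destruct (HU I (carrier X) (fun i => carrier (Ai i)) fu) as [L0 [Hinit Huniq]].
  destruct X as [cX sX sXe sXm]. destruct L0 as [A e abar over]. simpl in *. subst cX.
  assert (overf : forall i, Fmap U (abar i) = fu i).
  { intro i. rewrite over. reflexivity. }

  assert (kkk : forall B x, eqhom (eq_sym (lift_ob L B)) (eqhom (lift_ob L B) x) = x).
  { intros B x. exact (equal_f (eqhom_inv_l (lift_ob L B)) x). }
  assert (kkk' : forall B x, eqhom (lift_ob L B) (eqhom (eq_sym (lift_ob L B)) x) = x).
  { intros B x. exact (equal_f (eqhom_inv_r (lift_ob L B)) x). }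
  assert (Hcond : forall i, (fun x => fu i (sX (eqhom (lift_ob L A) x))) = Fmap U (str (Ai i) ∘ Fmap (MF Tb) (abar i))).
  { intro i. rewrite Fmap_comp. apply functional_extensionality; intro x. cbn.
    pose proof (equal_f (proj2_sig (f i)) (eqhom (lift_ob L A) x)) as H1. cbn in H1. fold (fu i) in H1.
    rewrite H1. f_equal.
    pose proof (equal_f (lift_nat' U T Tb L A (carrier (Ai i)) (abar i)) (eqhom (lift_ob L A) x)) as H2.
    cbn in H2. rewrite kkk in H2. rewrite H2, overf. reflexivity. }
  destruct (Hinit (Fob (MF Tb) A) (fun i => str (Ai i) ∘ Fmap (MF Tb) (abar i))
     (fun x => sX (eqhom (lift_ob L A) x)) Hcond) as [a [Ha1 Ha2]].
  assert (Ua' : Fmap U a = @comp SetCat _ _ _ sX (eqhom (lift_ob L A))) by exact Ha1.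
  assert (Ua : forall x, Fmap U a x = sX (eqhom (lift_ob L A) x)) by (intro; rewrite Ua'; reflexivity).
  assert (a_eta : a ∘ eta Tb A = idm A).
  { apply HUf. rewrite Fmap_comp, Fmap_id, (lift_eta' U T Tb L A).
    apply functional_extensionality; intro x; cbn. rewrite Ua, kkk'.
    exact (equal_f sXe x). }
  assert (a_mu : a ∘ mu Tb A = a ∘ Fmap (MF Tb) a).
  { apply HUf. rewrite !Fmap_comp. apply functional_extensionality; intro x; cbn.
    rewrite !Ua.
    pose proof (equal_f (lift_mu L A) x) as H1. cbn in H1. rewrite H1.
    pose proof (equal_f (lift_map L a) x) as H2. cbn in H2. rewrite H2.
    assert (H3 : Fmap (MF T) (Fmap U a) = Fmap (MF T) sX ∘ Fmap (MF T) (eqhom (lift_ob L A)))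
      by (rewrite <- Fmap_comp; f_equal; exact Ua').
    rewrite (equal_f H3). cbn. exact (equal_f sXm _). }
  match goal with |- exists _ : Lift _ _ ?X _ _, _ => set (Xo := X) end.
  pose (lobj := {| carrier := A; str := a; str_eta := a_eta; str_mu := a_mu |} : EMob Tb).
  assert (leq : Vob U T Tb L lobj = Xo).
  { unfold Vob, Xo. simpl. apply EMob_eq.
    apply functional_extensionality; intro x; cbn. rewrite Ua, kkk'. reflexivity. }
  pose (lmor := fun i => exist _ (abar i) (Ha2 i) : EMhom Tb lobj (Ai i)).
  assert (lover : forall i, Fmap (EMV U T Tb L) (lmor i) = @comp (EM T) _ _ _ (f i) (@eqhom (EM T) _ _ leq)).
  { intro i. apply EMhom_eq.
    change (Fmap U (abar i) = proj1_sig (f i) ∘ proj1_sig (@eqhom (EM T) _ _ leq)).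
    rewrite eqhom_EM, (proof_irrelevance _ (f_equal carrier leq) eq_refl).
    rewrite overf. reflexivity. }
  exists (Build_Lift (EMV U T Tb L) I Xo Ai f lobj leq lmor lover). split.
  - intros D g h Hgh.
    assert (Hc : forall i, (fun x => fu i (proj1_sig h x)) = Fmap U (proj1_sig (g i))).
    { intro i. exact (f_equal (@proj1_sig _ _) (Hgh i)). }
    destruct (Hinit (carrier D) (fun i => proj1_sig (g i)) (proj1_sig h) Hc) as [hb [Hb1 Hb2]].
    assert (Uhb : Fmap U hb = proj1_sig h) by exact Hb1.
    assert (Hhb : hb ∘ str D = a ∘ Fmap (MF Tb) hb).
    { apply HUf. rewrite !Fmap_comp. apply functional_extensionality; intro x; cbn.
      rewrite Ua.
      pose proof (equal_f (lift_map L hb) x) as H2. cbn in H2. rewrite H2.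
      rewrite (equal_f (f_equal (Fmap (MF T)) Uhb)).
      pose proof (equal_f (proj2_sig h) (eqhom (lift_ob L (carrier D)) x)) as H3.
      cbn in H3. rewrite kkk in H3. rewrite (equal_f Uhb). exact H3. }
    exists (exist _ hb Hhb : Hom (c := EM Tb) D lobj). split.
    + apply EMhom_eq.
      change (proj1_sig (@eqhom (EM T) _ _ leq) ∘ Fmap U hb = proj1_sig h).
      rewrite eqhom_EM, (proof_irrelevance _ (f_equal carrier leq) eq_refl).
      exact Hb1.
    + intro i. apply EMhom_eq. exact (Hb2 i).
  - intros L' HL'. destruct L' as [lob' leq' lmor' lover'].
    destruct (HL' lobj lmor (@eqhom (EM T) _ _ leq)) as [psi [Hp1 Hp2]].
    { intro i. symmetry. apply lover. }
    destruct lob' as [A' a' pe' pm'].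
    assert (over' : forall i, Fmap U (proj1_sig (lmor' i))
                  = @comp SetCat _ _ _ (fu i) (eqhom (f_equal carrier leq'))).
    { intro i. pose proof (f_equal (@proj1_sig _ _) (lover' i)) as H.
      change (Fmap U (proj1_sig (lmor' i)) = proj1_sig (f i) ∘ proj1_sig (@eqhom (EM T) _ _ leq')) in H.
      rewrite eqhom_EM in H. exact H. }
    pose (L0' := Build_Lift U I (Fob U A) (fun i => carrier (Ai i)) fu A'
                   (f_equal carrier leq') (fun i => proj1_sig (lmor' i)) over').
    assert (Hp1' : @comp SetCat _ _ _ (eqhom (f_equal carrier leq')) (Fmap U (proj1_sig psi)) = idm _).
    { pose proof (f_equal (@proj1_sig _ _) Hp1) as H.
      change (proj1_sig (@eqhom (EM T) _ _ leq') ∘ Fmap U (proj1_sig psi) = proj1_sig (@eqhom (EM T) _ _ leq)) in H.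
      rewrite !eqhom_EM, (proof_irrelevance _ (f_equal carrier leq) eq_refl) in H. exact H. }
    assert (init' : is_initial_lift U I (Fob U A) (fun i => carrier (Ai i)) fu L0').
    { intros D g h Hc. destruct (Hinit D g h Hc) as [hb [Hb1 Hb2]].
      exists (proj1_sig psi ∘ hb). split.
      - rewrite Fmap_comp. apply functional_extensionality; intro x. cbn.
        pose proof (equal_f Hp1' (Fmap U hb x)) as H. cbn in H. rewrite H.
        rewrite <- Hb1. reflexivity.
      - intro i. cbn. rewrite comp_assoc.
        pose proof (f_equal (@proj1_sig _ _) (Hp2 i)) as H. cbn in H. rewrite H. exact (Hb2 i). }
    pose proof (Huniq L0' init') as Heq.
    pose proof (f_equal (lob _ _ _ _ _) Heq) as HA. cbn in HA. subst A'.
    pose proof (f_equal (fun M => existT (fun o => forall i, Hom o (carrier (Ai i)))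
                   (lob _ _ _ _ _ M) (Defs.lmor _ _ _ _ _ M)) Heq) as Hm.
    cbn in Hm. apply inj_pair2 in Hm.
    assert (Ha' : a' = a).
    { apply HUf.
      pose proof (f_equal (fun Y => existT (fun c => Hom (Fob (MF T) c) c) (carrier Y) (str Y)) leq') as H.
      cbn in H. apply inj_pair2 in H.
      apply functional_extensionality; intro x. rewrite Ua, <- H. cbn. rewrite kkk. reflexivity. }
    subst a'.
    assert (pe' = a_eta) by apply proof_irrelevance. subst pe'.
    assert (pm' = a_mu) by apply proof_irrelevance. subst pm'.
    assert (leq' = leq) by apply proof_irrelevance. subst leq'.
    assert (lmor' = lmor).
    { apply functional_extensionality_dep; intro i. apply EMhom_eq.
      exact (f_equal (fun F => F i) Hm). }
    subst lmor'. f_equal. apply proof_irrelevance.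
Qed.
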